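(* Let $n\ge 3$ and $a,c>0$. Let $\Gamma'$ be the wheel on $n+1$ vertices: vertices $1,\dots,n$ form a cycle ($i$ joined to $i+1$, indices modulo $n$) with all conductances $c$, and vertex $n+1$ is joined to every vertex $1,\dots,n$ with conductance $a$. Put $q=\frac{a}{2c}+1$. Then $$K(\Gamma')=-\frac{1}{2c}\,\frac{n+1}{T_n(q)-1}\left[\left(\frac{an}{6c}-n+1\right)U_{n-1}(q)+\left(\frac{2c}{a}+\frac{n}{3}\right)\bigl(V_{n-1}(q)-1\bigr)\right]+\frac{1}{a}+\frac{n(n+1)}{6c}.$$
   Context: For a network with vertex set $\{1,\dots,N\}$ and conductances $c_{ij}>0$ on its edges, the Laplacian is the matrix $L$ with $L_{ii}=\sum_k c_{ik}$, $L_{ij}=-c_{ij}$ ($i\neq j$, $c_{ij}=0$ for non-edges). With $G'$ the group inverse of the Laplacian of $\Gamma'$, the effective resistance is $R(i,j)=G'_{ii}+G'_{jj}-2G'_{ij}$ and the Kirchhoff index is $K(\Gamma')=\frac12\sum_{i,j}R(i,j)$. $T_k,U_k$ are the Chebyshev polynomials of the first and second kind ($T_0=1,T_1=x,U_0=1,U_1=2x$, recurrence $p_{k+1}=2xp_k-p_{k-1}$) and $V_k$ those of the third kind ($V_0=1$, $V_1=2x-1$, $V_{k+1}=2xV_k-V_{k-1}$). *)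

(* Defs.v *)
From HB Require Import structures.
From mathcomp Require Import all_boot all_order all_algebra.
Set Implicit Arguments. Unset Strict Implicit. Unset Printing Implicit Defensive.
Import Order.TTheory GRing.Theory Num.Theory.
Local Open Scope ring_scope.

(* Laplacian of a network on vertex set 'I_N with conductance function cond
   (cond i j > 0 on edges, 0 on non-edges, cond i i = 0). *)
Definition laplacian (R : ringType) (N : nat) (cond : 'I_N -> 'I_N -> R) : 'M[R]_N :=
  \matrix_(i, j) (if i == j then \sum_k cond i k else - cond i j).

Definition is_group_inverse (R : ringType) (N : nat) (L G : 'M[R]_N) : Prop :=
  [/\ L *m G *m L = L, G *m L *m G = G & L *m G = G *m L].

Definition eff_res (R : ringType) (N : nat) (G : 'M[R]_N) (i j : 'I_N) : R :=
  G i i + G j j - 2 * G i j.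

Definition kirchhoff (R : fieldType) (N : nat) (G : 'M[R]_N) : R :=
  2^-1 * \sum_i \sum_j eff_res G i j.

(* Wheel on n+1 vertices: vertices 0..n-1 (paper's 1..n) form a cycle with
   conductance c; vertex n (paper's n+1) is the hub, joined to all others
   with conductance a. *)
Definition wheel_cond (R : ringType) (n : nat) (a c : R) (i j : 'I_n.+1) : R :=
  if i == j then 0
  else if (nat_of_ord i == n) || (nat_of_ord j == n) then a
  else if ((i.+1 %% n)%N == j) || ((j.+1 %% n)%N == i) then c
  else 0.

Fixpoint cheb_rec (R : ringType) (x p0 p1 : R) (k : nat) : R :=
  match k with
  | 0 => p0
  | 1 => p1
  | S (S k' as k1) => 2 * x * cheb_rec x p0 p1 k1 - cheb_rec x p0 p1 k'
  end.

Definition chebT (R : ringType) (k : nat) (x : R) : R := cheb_rec x 1 x k.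
Definition chebU (R : ringType) (k : nat) (x : R) : R := cheb_rec x 1 (2 * x) k.
Definition chebV (R : ringType) (k : nat) (x : R) : R := cheb_rec x 1 (2 * x - 1) k.

(* Main.v *)
Require Import Defs.
From HB Require Import structures.
From mathcomp Require Import all_boot all_order all_algebra.
From mathcomp Require Import ring lra zify.
Set Implicit Arguments. Unset Strict Implicit. Unset Printing Implicit Defensive.
Import Order.TTheory GRing.Theory Num.Theory.
Local Open Scope ring_scope.

Lemma cheb_recSS (R : ringType) (x p0 p1 : R) k :
  cheb_rec x p0 p1 k.+2 = 2 * x * cheb_rec x p0 p1 k.+1 - cheb_rec x p0 p1 k.
Proof. by []. Qed.

Lemma rec_uniq (R : ringType) (x : R) (f h : nat -> R) :
  (forall k, f k.+2 = 2 * x * f k.+1 - f k) ->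
  (forall k, h k.+2 = 2 * x * h k.+1 - h k) ->
  f 0%N = h 0%N -> f 1%N = h 1%N -> forall k, f k = h k.
Proof.
move=> Hf Hh H0 H1 k.
have : f k = h k /\ f k.+1 = h k.+1.
  elim: k => [|k [IH1 IH2]]; first by [].
  by split => //; rewrite Hf Hh IH1 IH2.
by case.
Qed.

Definition W (R : ringType) (q : R) k := cheb_rec q 0 1 k.

Lemma chebU_W (R : comRingType) (q : R) k : chebU k q = W q k.+1.
Proof.
apply: (rec_uniq (x := q) (f := fun k => chebU k q) (h := fun k => W q k.+1)) => //;
  try move=> m; rewrite /W /chebU /chebV /chebT ?cheb_recSS /=; ring.
Qed.

Lemma chebV_W (R : comRingType) (q : R) k : chebV k q = W q k.+1 - W q k.
Proof.
apply: (rec_uniq (x := q) (f := fun k => chebV k q) (h := fun k => W q k.+1 - W q k)) => //;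
  try move=> m; rewrite /W /chebU /chebV /chebT ?cheb_recSS /=; ring.
Qed.

Lemma chebT_W (R : comRingType) (q : R) k : chebT k.+1 q = q * W q k.+1 - W q k.
Proof.
apply: (rec_uniq (x := q) (f := fun k => chebT k.+1 q) (h := fun k => q * W q k.+1 - W q k)) => //;
  try move=> m; rewrite /W /chebU /chebV /chebT ?cheb_recSS /=; ring.
Qed.

Lemma W_pos (R : realFieldType) (q : R) : 1 < q ->
  forall k, 0 <= W q k /\ 1 <= W q k.+1 - W q k.
Proof.
move=> q1; elim=> [|k [IH1 IH2]]; first by rewrite /W /=; split; lra.
have e : W q k.+2 = 2 * q * W q k.+1 - W q k by [].
split; first lra.
rewrite e; nra.
Qed.

Lemma mulL (R : comRingType) N (cond : 'I_N -> 'I_N -> R) (H : 'M[R]_N) i j :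
  (forall i, cond i i = 0) ->
  (laplacian cond *m H) i j = \sum_k cond i k * (H i j - H k j).
Proof.
move=> c0; rewrite !mxE (bigD1 i) //= mxE eqxx.
rewrite [RHS](bigD1 i) //= c0 mul0r add0r.
have -> : \sum_k cond i k = \sum_(k | k != i) cond i k.
  by rewrite (bigD1 i) //= c0 add0r.
rewrite big_distrl /= -big_split /=.
apply: eq_bigr => k hk; rewrite mxE eq_sym (negbTE hk); ring.
Qed.

Lemma colsumL (R : comRingType) N (cond : 'I_N -> 'I_N -> R) k :
  (forall i, cond i i = 0) -> (forall i j, cond i j = cond j i) ->
  \sum_i laplacian cond i k = 0.
Proof.
move=> c0 cs; rewrite (bigD1 k) //= mxE eqxx.
rewrite [X in X + _](bigD1 k) //= c0 add0r -big_split /= big1 //.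
by move=> i hi; rewrite mxE (negbTE hi) cs; ring.
Qed.

Lemma trL (R : comRingType) N (cond : 'I_N -> 'I_N -> R) :
  (forall i j, cond i j = cond j i) -> (laplacian cond)^T = laplacian cond.
Proof.
by move=> cs; apply/matrixP => i j; rewrite !mxE eq_sym; case: eqP => [->|] //; rewrite cs.
Qed.

Lemma ginv_uniq (R : ringType) (L G1 G2 : R) :
  L * G1 * L = L -> G1 * L * G1 = G1 -> L * G1 = G1 * L ->
  L * G2 * L = L -> G2 * L * G2 = G2 -> L * G2 = G2 * L -> G1 = G2.
Proof.
move=> a1 b1 c1 a2 b2 c2.
have P1 : L * G1 = L * G2 * (L * G1) by rewrite mulrA a2.
have P2 : L * G2 = L * G2 * (L * G1).
  transitivity (G2 * (L * G1 * L)); first by rewrite a1 c2.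
  by rewrite !mulrA -c2 -!mulrA c1.
have E : L * G1 = L * G2 by rewrite P1 -P2.
by rewrite -b1 -c1 E c2 -mulrA E mulrA b2.
Qed.

Definition sn n i := if i.+1 == n then 0%N else i.+1.
Definition pn n i := if i == 0%N then n.-1 else i.-1.
Definition dist n i j := if (i <= j)%N then (j - i)%N else (j + n - i)%N.

Lemma snE n i : (i < n)%N -> (i.+1 %% n = sn n i)%N.
Proof.
rewrite /sn => hi; case: eqP => [->|h]; first by rewrite modnn.
by rewrite modn_small //; lia.
Qed.

Lemma cond_nat (R : ringType) (a c : R) n i k : (3 <= n)%N -> (i < n)%N -> (k <= n)%N ->
  (if i == k then 0 else if (i == n) || (k == n) then a
   else if ((i.+1 %% n)%N == k) || ((k.+1 %% n)%N == i) then c else 0)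
  = (if k == n then a else 0) + (if k == sn n i then c else 0) + (if k == pn n i then c else 0).
Proof.
move=> n3 hi hk; rewrite snE //.
have [->|kn] := eqVneq k n.
  have -> : (i == n) = false by lia.
  have -> : (n == sn n i) = false by rewrite /sn; case: ifP; lia.
  have -> : (n == pn n i) = false by rewrite /pn; case: ifP; lia.
  by rewrite orbT !addr0.
rewrite snE; last by lia.
rewrite /sn /pn.
have -> : (i == n) = false by lia.
rewrite add0r /=.
by repeat case: ifP; rewrite ?addr0 ?add0r //; lia.
Qed.

Lemma dist_lt n i j : (i < n)%N -> (j < n)%N -> (dist n i j < n)%N.
Proof. rewrite /dist; case: ifP; lia. Qed.

Lemma dist0 n i j : (i < n)%N -> (j < n)%N -> (dist n i j == 0%N) = (i == j).
Proof. rewrite /dist; case: ifP; lia. Qed.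

Lemma dist_sn n i j : (i < n)%N -> (j < n)%N ->
  dist n (sn n i) j = if dist n i j == 0%N then n.-1 else (dist n i j).-1.
Proof. rewrite /dist /sn; repeat case: ifP; lia. Qed.

Lemma dist_pn n i j : (i < n)%N -> (j < n)%N ->
  dist n (pn n i) j = if dist n i j == n.-1 then 0%N else (dist n i j).+1.
Proof. rewrite /dist /pn; repeat case: ifP; lia. Qed.

Lemma dist_sym n i j : (i < n)%N -> (j < n)%N ->
  dist n j i = if i == j then 0%N else (n - dist n i j)%N.
Proof. rewrite /dist; repeat case: ifP; lia. Qed.

Definition qv (R : realFieldType) (a c : R) := a / (2 * c) + 1.
Definition Tv (R : realFieldType) n (a c : R) := qv a c * W (qv a c) n - W (qv a c) n.-1.
Definition gg (R : realFieldType) n (a c : R) k :=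
  (2 * c * (Tv n a c - 1))^-1 * (W (qv a c) (n - k) + W (qv a c) k).

Lemma Wrec (R : comRingType) (q : R) m : (1 <= m)%N -> W q m.+1 + W q m.-1 = 2 * q * W q m.
Proof. by case: m => // m _; rewrite /W cheb_recSS /=; ring. Qed.

Lemma Tv_gt1 (R : realFieldType) n (a c : R) : (1 <= n)%N -> 0 < a -> 0 < c -> 1 < Tv n a c.
Proof.
move=> n1 a0 c0.
have q1 : 1 < qv a c by rewrite /qv ltrDr divr_gt0 // mulr_gt0.
have [h0 h1] := W_pos q1 n.-1.
rewrite /Tv; move: h0 h1; rewrite (ltn_predK n1) => h0 h1.
have : 1 <= W (qv a c) n by lra.
nra.
Qed.

Lemma g_sym (R : realFieldType) n (a c : R) k : (k <= n)%N -> gg n a c (n - k) = gg n a c k.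
Proof. by move=> hk; rewrite /gg subKn //; congr (_ * _); rewrite addrC. Qed.

Lemma g_rec (R : realFieldType) n (a c : R) k : (1 <= k)%N -> (k < n)%N ->
  gg n a c k.-1 + gg n a c k.+1 = 2 * qv a c * gg n a c k.
Proof.
move=> k1 kn; rewrite /gg.
have -> : (n - k.-1 = (n - k).+1)%N by lia.
have -> : (n - k.+1 = (n - k).-1)%N by lia.
have e1 := Wrec (qv a c) k1.
have e2 := Wrec (qv a c) (_ : (1 <= n - k)%N).
rewrite -mulrDr; set q := qv a c; rewrite -[in RHS]mulrCA; congr (_ * _).
rewrite mulrDr -e1 -e2; [ring | lia].
Qed.

Lemma g_0 (R : realFieldType) n (a c : R) : (2 <= n)%N -> 0 < a -> 0 < c ->
  2 * qv a c * gg n a c 0 - 2 * gg n a c 1 = c^-1.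
Proof.
move=> n2 a0 c0.
have T1 := Tv_gt1 (ltnW n2) a0 c0.
have hT : Tv n a c - 1 != 0 by rewrite subr_eq0 gt_eqF.
have hc : c != 0 by rewrite gt_eqF.
move: hT; rewrite /gg /Tv subn0 -subn1 => hT.
have -> : W (qv a c) 0 = 0 by [].
have -> : W (qv a c) 1 = 1 by [].
by field; rewrite hT hc.
Qed.

Lemma g_cyc (R : realFieldType) n (a c : R) k : (3 <= n)%N -> 0 < a -> 0 < c -> (k < n)%N ->
  2 * qv a c * gg n a c k - gg n a c (if k == 0%N then n.-1 else k.-1)
    - gg n a c (if k == n.-1 then 0%N else k.+1) = if k == 0%N then c^-1 else 0.
Proof.
move=> n3 a0 c0 kn.
have [->|k0] := eqVneq k 0%N.
  have -> : (0 == n.-1)%N = false by lia.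
  have -> : n.-1 = (n - 1)%N by lia.
  rewrite (g_sym (n:=n) a c (k:=1)); last by lia.
  rewrite /= -(g_0 (n:=n) (a:=a) (c:=c)) //; [ring | lia].
have [kn1|kn1] := eqVneq k n.-1.
  rewrite -(g_sym _ _ (leq0n n)) subn0.
  have -> : n = k.+1 by lia.
  rewrite -(g_rec _ _ (k := k)); [ring | lia | lia].
rewrite -(g_rec _ _ (k := k)); [ring | lia | lia].
Qed.

Lemma sum_wheel (R : realFieldType) n (a c : R) (i : 'I_n.+1) (F : 'I_n.+1 -> R) :
  (3 <= n)%N -> (i < n)%N ->
  \sum_k wheel_cond a c i k * F k =
    a * F ord_max + c * F (inord (sn n i)) + c * F (inord (pn n i)).
Proof.
move=> n3 hi.
have hs : (sn n i < n)%N by rewrite /sn; case: ifP; lia.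
have hp : (pn n i < n)%N by rewrite /pn; case: ifP; lia.
rewrite (eq_bigr (fun k => (if k == ord_max then a * F k else 0)
   + (if k == inord (sn n i) then c * F k else 0)
   + (if k == inord (pn n i) then c * F k else 0))).
  by rewrite !big_split /= -!big_mkcond !big_pred1_eq.
move=> k _.
have hk : (k <= n)%N by rewrite -ltnS.
rewrite /wheel_cond -[i == k]val_eqE -[k == ord_max]val_eqE
  -[k == inord _]val_eqE -[k == inord (pn n i)]val_eqE /= !inordK; try lia.
rewrite (cond_nat a c n3 hi hk).
by rewrite !mulrDl; congr (_ + _ + _); case: ifP; rewrite ?mul0r.
Qed.

Definition Nn (R : ringType) n : R := n.+1%:R.
Definition kap (R : realFieldType) n (a : R) := ((Nn R n)^-1 + (Nn R n ^+ 2)^-1) / a.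
Definition yv (R : realFieldType) n (a : R) := - (a * Nn R n ^+ 2)^-1.
Definition zv (R : realFieldType) n (a : R) := n%:R / (a * Nn R n ^+ 2).

Definition Hm (R : realFieldType) n (a c : R) : 'M[R]_n.+1 :=
  \matrix_(i, j) if (val i == n) then (if val j == n then zv n a else yv n a)
                 else if (val j == n) then yv n a else gg n a c (dist n i j) - kap n a.
Definition Pm (R : realFieldType) n : 'M[R]_n.+1 :=
  \matrix_(i, j) ((i == j)%:R - (Nn R n)^-1).

Lemma wheel_cond0 (R : realFieldType) n (a c : R) (i : 'I_n.+1) : wheel_cond a c i i = 0.
Proof. by rewrite /wheel_cond eqxx. Qed.

Lemma wheel_sym (R : realFieldType) n (a c : R) (i j : 'I_n.+1) :
  wheel_cond a c i j = wheel_cond a c j i.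
Proof. by rewrite /wheel_cond eq_sym orbC [X in if X then c else 0]orbC. Qed.

Lemma LH_cyc (R : realFieldType) n (a c : R) (i j : 'I_n.+1) :
  (3 <= n)%N -> 0 < a -> 0 < c -> (i < n)%N ->
  (laplacian (wheel_cond a c) *m Hm n a c) i j = Pm R n i j.
Proof.
move=> n3 a0 c0 hi.
have hs : (sn n i < n)%N by rewrite /sn; case: ifP; lia.
have hp : (pn n i < n)%N by rewrite /pn; case: ifP; lia.
have hN : Nn R n != 0 by rewrite /Nn pnatr_eq0.
have ha : a != 0 by rewrite gt_eqF.
have hc : c != 0 by rewrite gt_eqF.
rewrite mulL; last exact: wheel_cond0.
rewrite sum_wheel // !mxE /= !inordK; try lia.
have -> : (i == n :> nat) = false by lia.
have -> : (sn n i == n) = false by lia.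
have -> : (pn n i == n) = false by lia.
rewrite eqxx.
have [jn|jn] := eqVneq (val j) n.
  have -> : (i == j) = false by apply/negP => /eqP e; move: hi; rewrite e jn ltnn.
  move: hN; rewrite /yv /zv /kap /Nn -natr1 /= => hN.
  by field; rewrite ha hN.
have jn' : (nat_of_ord j != n) := jn.
have hj : (j < n)%N by have := ltn_ord j; lia.
have key := g_cyc n3 a0 c0 (dist_lt hi hj).
rewrite -dist_sn // -dist_pn // dist0 // in key.
rewrite -[i == j]val_eqE.
move: key; set g0 := gg n a c (dist n i j); set gs := gg n a c _; set gp := gg n a c _.
move=> key.
have -> : gs = 2 * qv a c * g0 - gp - (if (i == j :> nat) then c^-1 else 0) by rewrite -key; ring.
move: hN; rewrite /qv /yv /kap /Nn -natr1 => hN.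
by case: ifP => _ /=; field; rewrite ha hN hc.
Qed.

Lemma colsum_LH (R : realFieldType) n (a c : R) j :
  \sum_i (laplacian (wheel_cond a c) *m Hm n a c) i j = 0.
Proof.
under eq_bigr do rewrite mxE.
rewrite exchange_big /= big1 // => k _.
by rewrite -mulr_suml colsumL ?mul0r //; [exact: wheel_cond0 | exact: wheel_sym].
Qed.

Lemma colsum_P (R : realFieldType) n j : \sum_i Pm R n i j = 0.
Proof.
under eq_bigr do rewrite mxE.
rewrite sumrB sumr_const card_ord (bigD1 j) //= eqxx big1 ?addr0; last first.
  by move=> i /negbTE ->.
by rewrite /Nn -[_ *+ n.+1]mulr_natr mulVf ?subrr // pnatr_eq0.
Qed.

Lemma last_eq (R : realFieldType) n (X Y : 'M[R]_n.+1) j :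
  \sum_i X i j = 0 -> \sum_i Y i j = 0 ->
  (forall i : 'I_n, X (widen_ord (leqnSn n) i) j = Y (widen_ord (leqnSn n) i) j) ->
  X ord_max j = Y ord_max j.
Proof.
move=> hx hy h; move: hx; rewrite big_ord_recr /=.
under eq_bigr do rewrite h.
move=> hx; move: hy; rewrite big_ord_recr /= => hy.
by apply: (addrI (\sum_(i < n) Y (widen_ord (leqnSn n) i) j)); rewrite hx hy.
Qed.

Lemma LH (R : realFieldType) n (a c : R) :
  (3 <= n)%N -> 0 < a -> 0 < c ->
  laplacian (wheel_cond a c) *m Hm n a c = Pm R n.
Proof.
move=> n3 a0 c0; apply/matrixP => i j.
have [hi|hi] := ltnP i n; first exact: LH_cyc.
have -> : i = ord_max by apply: val_inj => /=; have := ltn_ord i; lia.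
apply: last_eq; [exact: colsum_LH | exact: colsum_P |] => k.
by apply: LH_cyc => //=.
Qed.

Lemma colsum_H (R : realFieldType) n (a c : R) j :
  (3 <= n)%N -> 0 < a -> 0 < c -> \sum_k Hm n a c k j = 0.
Proof.
move=> n3 a0 c0.
have e : (laplacian (wheel_cond a c) *m Hm n a c) ord_max j = Pm R n ord_max j.
  by rewrite LH.
move: e.
rewrite mulL; last exact: wheel_cond0.
rewrite (eq_bigr (fun k => a * (Hm n a c ord_max j - Hm n a c k j))); last first.
  move=> k _; rewrite /wheel_cond /= eqxx orTb.
  by case: eqP => [<-|]; rewrite ?subrr ?mulr0.
rewrite -mulr_sumr sumrB sumr_const card_ord.
set S := \sum_k _.
have hN : Nn R n != 0 by rewrite /Nn pnatr_eq0.
have ha : a != 0 by rewrite gt_eqF.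
rewrite -[_ *+ n.+1]mulr_natr => e.
have -> : S = Hm n a c ord_max j * n.+1%:R - (Pm R n ord_max j) / a.
  by rewrite -e; field.
move: hN; rewrite !mxE /= eqxx /yv /zv /Nn -natr1 => hN.
have [jn|jn] := eqVneq (val j) n.
  have -> : (ord_max == j) = true by apply/eqP/val_inj.
  by rewrite /=; field; rewrite ha hN.
have -> : (ord_max == j) = false by apply/negP => /eqP e2; move: jn; rewrite -e2 /= eqxx.
rewrite ?(negbTE jn) /=; field; by rewrite ha hN.
Qed.

Lemma Hm_sym (R : realFieldType) n (a c : R) i j :
  (1 <= n)%N -> Hm n a c i j = Hm n a c j i.
Proof.
move=> n1; rewrite !mxE.
have [hi|hi] := eqVneq (val i) n; have [hj|hj] := eqVneq (val j) n => //.
have hi' : (i < n)%N by have := ltn_ord i; move: hi => /= hi; lia.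
have hj' : (j < n)%N by have := ltn_ord j; move: hj => /= hj; lia.
rewrite (dist_sym hi' hj').
case: eqP => [e|ne]; first by move: (dist0 hi' hj'); rewrite e eqxx => /eqP ->.
by rewrite g_sym //; have := dist_lt hi' hj'; lia.
Qed.

Lemma PmX (R : realFieldType) n (X : 'M[R]_n.+1) :
  (forall j, \sum_k X k j = 0) -> Pm R n *m X = X.
Proof.
move=> hX; apply/matrixP => i j; rewrite mxE.
under eq_bigr do rewrite mxE mulrBl.
rewrite sumrB -mulr_sumr hX mulr0 subr0 (bigD1 i) //= eqxx mul1r big1 ?addr0 //.
by move=> k hk; rewrite eq_sym (negbTE hk) mul0r.
Qed.

Lemma Hm_tr (R : realFieldType) n (a c : R) : (1 <= n)%N -> (Hm n a c)^T = Hm n a c.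
Proof. by move=> n1; apply/matrixP => i j; rewrite mxE Hm_sym. Qed.

Lemma Pm_tr (R : realFieldType) n : (Pm R n)^T = Pm R n.
Proof. by apply/matrixP => i j; rewrite !mxE eq_sym. Qed.

Lemma HL (R : realFieldType) n (a c : R) :
  (3 <= n)%N -> 0 < a -> 0 < c ->
  Hm n a c *m laplacian (wheel_cond a c) = Pm R n.
Proof.
move=> n3 a0 c0.
rewrite -[Hm n a c]Hm_tr; last by lia.
rewrite -[laplacian _]trL; last exact: wheel_sym.
by rewrite -trmx_mul LH // Pm_tr.
Qed.

Lemma ginvH (R : realFieldType) n (a c : R) :
  (3 <= n)%N -> 0 < a -> 0 < c ->
  is_group_inverse (laplacian (wheel_cond a c)) (Hm n a c).
Proof.
move=> n3 a0 c0; split.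
- rewrite LH // PmX // => j; apply: colsumL; [exact: wheel_cond0 | exact: wheel_sym].
- by rewrite HL // PmX // => j; apply: colsum_H.
- by rewrite LH // HL.
Qed.

Lemma G_eq (R : realFieldType) n (a c : R) (G : 'M[R]_n.+1) :
  (3 <= n)%N -> 0 < a -> 0 < c ->
  is_group_inverse (laplacian (wheel_cond a c)) G -> G = Hm n a c.
Proof.
move=> n3 a0 c0 [g1 g2 g3]; have [h1 h2 h3] := ginvH n3 a0 c0.
move: g1 g2 g3 h1 h2 h3; rewrite !mulmxE => g1 g2 g3 h1 h2 h3.
exact: (ginv_uniq g1 g2 g3 h1 h2 h3).
Qed.

Lemma kirch_H (R : realFieldType) n (a c : R) :
  (3 <= n)%N -> 0 < a -> 0 < c ->
  kirchhoff (Hm n a c) = Nn R n * (n%:R * (gg n a c 0 - kap n a) + zv n a).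
Proof.
move=> n3 a0 c0.
have rs : forall i, \sum_j Hm n a c i j = 0.
  move=> i; rewrite -[RHS](colsum_H i n3 a0 c0); apply: eq_bigr => j _; apply: Hm_sym; lia.
have tr : \sum_i Hm n a c i i = n%:R * (gg n a c 0 - kap n a) + zv n a.
  rewrite big_ord_recr /= !mxE /= eqxx.
  rewrite (eq_bigr (fun _ => gg n a c 0 - kap n a)); last first.
    move=> i _; rewrite !mxE /=.
    have -> : (i == n :> nat) = false by have := ltn_ord i; lia.
    by rewrite /dist leqnn subnn.
  by rewrite sumr_const card_ord mulr_natl.
rewrite /kirchhoff /eff_res.
set t := n%:R * _ + _ in tr *.
under eq_bigr do rewrite sumrB big_split /= sumr_const card_ord -mulr_sumr rs mulr0 subr0.
rewrite big_split /= sumr_const card_ord tr.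
rewrite sumrMnl tr /Nn -[t *+ n.+1]mulr_natl.
by field.
Qed.
Theorem corollary3p2 (R : realFieldType) (n : nat) (a c : R) :
  (3 <= n)%N -> 0 < a -> 0 < c ->
  let L := laplacian (wheel_cond a c) in
  let q := a / (2 * c) + 1 in
  (exists G : 'M[R]_n.+1, is_group_inverse L G) /\
  (forall G : 'M[R]_n.+1, is_group_inverse L G ->
     kirchhoff G =
       - (2 * c)^-1 * ((n%:R + 1) / (chebT n q - 1)) *
         ((a * n%:R / (6 * c) - n%:R + 1) * chebU n.-1 q
          + (2 * c / a + n%:R / 3) * (chebV n.-1 q - 1))
       + a^-1 + n%:R * (n%:R + 1) / (6 * c)).
Proof.
move=> n3 a0 c0 L q; split.
  by exists (Hm n a c); exact: ginvH.
move=> G hG; rewrite (G_eq n3 a0 c0 hG) kirch_H //.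
have nP := ltn_predK n3.
have -> : chebT n q = Tv n a c by rewrite -{1}nP chebT_W nP.
rewrite chebU_W chebV_W nP.
have T1 := Tv_gt1 (ltnW (ltnW n3)) a0 c0.
have hT : Tv n a c - 1 != 0 by rewrite subr_eq0 gt_eqF.
have ha : a != 0 by rewrite gt_eqF.
have hc : c != 0 by rewrite gt_eqF.
have hN : n%:R + 1 != 0 :> R by rewrite natr1 pnatr_eq0.
rewrite /gg /kap /zv /Nn -natr1 subn0.
have -> : W (qv a c) 0 = 0 by [].
rewrite /q -/(qv a c).
move: hT; rewrite /Tv; set w := W _ n; set v := W _ n.-1 => hT.
move: hT; rewrite /qv => hT.
have h3 : (a + 2 * c) * w + - v * (2 * c) + -1 * (2 * c) != 0.
  have -> : (a + 2 * c) * w + - v * (2 * c) + -1 * (2 * c)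
      = (2 * c) * ((a / (2 * c) + 1) * w - v - 1) by field.
  by rewrite mulf_neq0 // mulf_neq0 // pnatr_eq0.
field.
by rewrite hc ha h3 hN.
Qed.
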